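(* Consider the single-node stochastic clearing problem described in the context, and assume the incremental bid prices $\Delta\alpha_i^{g,+},\Delta\alpha_i^{g,-},\Delta\alpha_j^{d,+},\Delta\alpha_j^{d,-}$ are all positive. Let $(d_j,g_i,D_j(\cdot),G_i(\cdot))$ be an optimal solution with associated prices $(\pi,\Pi(\cdot))$. Then the price distortion $\mathcal{M}^\pi:=\pi-\mathbb{E}[\Pi(\omega)]$ satisfies $$-\Delta\alpha^+\le\mathcal{M}^\pi\le\Delta\alpha^-,$$ where $\Delta\alpha^+=\min\{\min_{i\in\mathcal{G}}\Delta\alpha_i^{g,+},\min_{j\in\mathcal{D}}\Delta\alpha_j^{d,+}\}$ and $\Delta\alpha^-=\min\{\min_{i\in\mathcal{G}}\Delta\alpha_i^{g,-},\min_{j\in\mathcal{D}}\Delta\alpha_j^{d,-}\}$.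
   Context: Finite nonempty sets of suppliers $\mathcal{G}$ and consumers $\mathcal{D}$; a finite scenario set $\Omega$ with probabilities $p(\omega)>0$, $\sum_\omega p(\omega)=1$, and $\mathbb{E}[Y(\omega)]=\sum_\omega p(\omega)Y(\omega)$. Data: bid prices $\alpha_i^g,\alpha_j^d\ge 0$, incremental bid prices $\Delta\alpha_i^{g,\pm},\Delta\alpha_j^{d,\pm}$, real-time capacities $\bar G_i(\omega),\bar D_j(\omega)\ge 0$. $(x)_+=\max\{x,0\}$, $(x)_-=\max\{-x,0\}$. The single-node stochastic clearing problem is: minimize over free day-ahead variables $g_i,d_j\in\mathbb{R}$ and real-time variables $G_i(\omega),D_j(\omega)$ $$\sum_{i\in\mathcal{G}}\mathbb{E}[\alpha_i^gG_i(\omega)+\Delta\alpha_i^{g,+}(G_i(\omega)-g_i)_++\Delta\alpha_i^{g,-}(G_i(\omega)-g_i)_-]+\sum_{j\in\mathcal{D}}\mathbb{E}[-\alpha_j^dD_j(\omega)+\Delta\alpha_j^{d,+}(D_j(\omega)-d_j)_-+\Delta\alpha_j^{d,-}(D_j(\omega)-d_j)_+]$$ subject to $\sum_i g_i=\sum_j d_j$ (multiplier $\pi$), $\sum_i(G_i(\omega)-g_i)=\sum_j(D_j(\omega)-d_j)$ for each $\omega$ (multiplier $p(\omega)\Pi(\omega)$), $0\le G_i(\omega)\le\bar G_i(\omega)$, $0\le D_j(\omega)\le\bar D_j(\omega)$. ''Optimal solution with associated prices $(\pi,\Pi(\cdot))$'' means the solution minimizes the partial Lagrange function $\text{objective}-\pi(\sum_ig_i-\sum_jd_j)-\mathbb{E}[\Pi(\omega)(\sum_i(G_i(\omega)-g_i)-\sum_j(D_j(\omega)-d_j))]$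 over all $g_i,d_j\in\mathbb{R}$ and all $G_i(\cdot),D_j(\cdot)$ satisfying the bound constraints. *)

(* Defs.v *)
From HB Require Import structures.
From mathcomp Require Import all_boot all_order all_algebra.
Set Implicit Arguments. Unset Strict Implicit. Unset Printing Implicit Defensive.
Import Order.TTheory GRing.Theory Num.Theory.
Local Open Scope ring_scope.

Section Market.
Context {R : realFieldType} {GT DT Om : finType}.

Definition pospart (x : R) : R := Num.max x 0.
Definition negpart (x : R) : R := Num.max (- x) 0.

Definition expect (p : Om -> R) (Y : Om -> R) : R := \sum_(w : Om) p w * Y w.

(* minimum of f over a nonempty finite type (x0 is any element; the value
   does not depend on it) *)
Definition finmin (T : finType) (x0 : T) (f : T -> R) : R :=
  \big[Num.min/f x0]_(x : T) f x.

Variables (p : Om -> R)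
  (ag : GT -> R) (ad : DT -> R)
  (dgp dgm : GT -> R) (ddp ddm : DT -> R)
  (Gbar : GT -> Om -> R) (Dbar : DT -> Om -> R).

Definition objective (g : GT -> R) (d : DT -> R)
    (Gr : GT -> Om -> R) (Dr : DT -> Om -> R) : R :=
  \sum_(i : GT) expect p (fun w => ag i * Gr i w
                         + dgp i * pospart (Gr i w - g i)
                         + dgm i * negpart (Gr i w - g i))
  + \sum_(j : DT) expect p (fun w => - ad j * Dr j w
                         + ddp j * negpart (Dr j w - d j)
                         + ddm j * pospart (Dr j w - d j)).

Definition lagrangian (pi : R) (Pi : Om -> R) (g : GT -> R) (d : DT -> R)
    (Gr : GT -> Om -> R) (Dr : DT -> Om -> R) : R :=
  objective g d Gr Dr
  - pi * (\sum_(i : GT) g i - \sum_(j : DT) d j)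
  - expect p (fun w => Pi w * (\sum_(i : GT) (Gr i w - g i)
                                 - \sum_(j : DT) (Dr j w - d j))).

Definition bounds_ok (Gr : GT -> Om -> R) (Dr : DT -> Om -> R) : Prop :=
  (forall i w, 0 <= Gr i w <= Gbar i w) /\ (forall j w, 0 <= Dr j w <= Dbar j w).

Definition feasible (g : GT -> R) (d : DT -> R)
    (Gr : GT -> Om -> R) (Dr : DT -> Om -> R) : Prop :=
  \sum_(i : GT) g i = \sum_(j : DT) d j /\
  (forall w, \sum_(i : GT) (Gr i w - g i) = \sum_(j : DT) (Dr j w - d j)) /\
  bounds_ok Gr Dr.

Definition optimal_with_prices (g : GT -> R) (d : DT -> R)
    (Gr : GT -> Om -> R) (Dr : DT -> Om -> R) (pi : R) (Pi : Om -> R) : Prop :=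
  feasible g d Gr Dr /\
  forall (g' : GT -> R) (d' : DT -> R) (Gr' : GT -> Om -> R) (Dr' : DT -> Om -> R),
    bounds_ok Gr' Dr' ->
    lagrangian pi Pi g d Gr Dr <= lagrangian pi Pi g' d' Gr' Dr'.

End Market.

(* Main.v *)
Require Import Defs.
From HB Require Import structures.
From mathcomp Require Import all_boot all_order all_algebra.
From mathcomp Require Import ring lra.
From Stdlib Require Import FunctionalExtensionality.
Import Order.TTheory GRing.Theory Num.Theory.
Local Open Scope ring_scope.

Section Aux.
Variable R : realFieldType.

Lemma pp_dec (x : R) : pospart (x - 1) <= pospart x.
Proof. rewrite /pospart !maxEle. case: (lerP (x-1) 0) => h1; case: (lerP x 0) => h2; lra. Qed.
Lemma pp_inc (x : R) : pospart (x + 1) <= pospart x + 1.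
Proof. rewrite /pospart !maxEle. case: (lerP (x+1) 0) => h1; case: (lerP x 0) => h2; lra. Qed.
Lemma np_dec (x : R) : negpart (x + 1) <= negpart x.
Proof. rewrite /negpart !maxEle. case: (lerP (-(x+1)) 0) => h1; case: (lerP (-x) 0) => h2; lra. Qed.
Lemma np_inc (x : R) : negpart (x - 1) <= negpart x + 1.
Proof. rewrite /negpart !maxEle. case: (lerP (-(x-1)) 0) => h1; case: (lerP (-x) 0) => h2; lra. Qed.

Lemma sum_perturb (T : finType) (h h' : T -> R) (i : T) :
  (forall k, k != i -> h' k = h k) ->
  \sum_k h' k = \sum_k h k + (h' i - h i).
Proof.
move=> H; rewrite (bigD1 i) //= [in RHS](bigD1 i) //=.
rewrite (eq_bigr (fun k => h k)) => [|k /H //]; lra.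
Qed.

Lemma le_finmin (T : finType) (x0 : T) (f : T -> R) c :
  (forall x, c <= f x) -> c <= finmin x0 f.
Proof.
move=> H; rewrite /finmin; elim/big_ind: _ => //.
by move=> x y hx hy; rewrite le_min hx hy.
Qed.

Variables (Om : finType) (p : Om -> R) (hp_pos : forall w, 0 < p w)
  (hp_sum : \sum_(w : Om) p w = 1).

Lemma expect_le (f h : Om -> R) : (forall w, f w <= h w) -> expect p f <= expect p h.
Proof.
move=> H; rewrite /expect; apply: ler_sum => w _.
by apply: ler_wpM2l; [exact: ltW|].
Qed.

Lemma expect_cst c : expect p (fun _ => c) = c.
Proof. by rewrite /expect -mulr_suml hp_sum mul1r. Qed.

Lemma expectB (f h : Om -> R) : expect p f - expect p h = expect p (fun w => f w - h w).
Proof. by rewrite /expect -sumrB; apply: eq_bigr => w _; rewrite mulrBr. Qed.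

Lemma expect_shift (Pi S : Om -> R) t :
  expect p (fun w => Pi w * (S w - t)) = expect p (fun w => Pi w * S w) - t * expect p Pi.
Proof.
rewrite /expect mulr_sumr -sumrB; apply: eq_bigr => w _; ring.
Qed.

Lemma expect_shift' (Pi S : Om -> R) t :
  expect p (fun w => Pi w * (S w + t)) = expect p (fun w => Pi w * S w) + t * expect p Pi.
Proof.
rewrite /expect mulr_sumr -big_split; apply: eq_bigr => w _ /=; ring.
Qed.

Variables (GT DT : finType) (ag : GT -> R) (ad : DT -> R)
  (dgp dgm : GT -> R) (ddp ddm : DT -> R)
  (Gbar : GT -> Om -> R) (Dbar : DT -> Om -> R).

Lemma gen_perturb pi Pi g d Gr Dr (i : GT) t :
  let g' := fun k => if k == i then g k + t else g k in
  lagrangian p ag ad dgp dgm ddp ddm pi Pi g' d Gr Dr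
  - lagrangian p ag ad dgp dgm ddp ddm pi Pi g d Gr Dr
  = expect p (fun w => dgp i * (pospart (Gr i w - g i - t) - pospart (Gr i w - g i))
                     + dgm i * (negpart (Gr i w - g i - t) - negpart (Gr i w - g i)))
    - t * (pi - expect p Pi).
Proof.
move=> g'.
have hg' : forall k, k != i -> g' k = g k by move=> k hk; rewrite /g' (negbTE hk).
have gi : g' i = g i + t by rewrite /g' eqxx.
rewrite /lagrangian /objective.
rewrite (@sum_perturb GT g g' i hg') gi.
rewrite (@sum_perturb GT
  (fun k => expect p (fun w => ag k * Gr k w + dgp k * pospart (Gr k w - g k)
                                   + dgm k * negpart (Gr k w - g k)))
  (fun k => expect p (fun w => ag k * Gr k w + dgp k * pospart (Gr k w - g' k)
                                   + dgm k * negpart (Gr k w - g' k))) i);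
  last by move=> k hk /=; rewrite hg'.
have E : forall w, \sum_k (Gr k w - g' k) = \sum_k (Gr k w - g k) - t.
  move=> w; rewrite (@sum_perturb GT (fun k => Gr k w - g k)
     (fun k => Gr k w - g' k) i) /=; first by rewrite gi; ring.
  by move=> k hk; rewrite hg'.
have F : (fun w => Pi w * (\sum_k (Gr k w - g' k) - \sum_j (Dr j w - d j)))
  = (fun w => Pi w * ((\sum_k (Gr k w - g k) - \sum_j (Dr j w - d j)) - t)).
  by apply: functional_extensionality => w; rewrite E; congr (_ * _); ring.
rewrite F expect_shift /= gi.
rewrite expectB.
have G : expect p (fun w => ag i * Gr i w + dgp i * pospart (Gr i w - (g i + t))
     + dgm i * negpart (Gr i w - (g i + t)) -
      (ag i * Gr i w + dgp i * pospart (Gr i w - g i) + dgm i * negpart (Gr i w - g i)))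
  = expect p (fun w => dgp i * (pospart (Gr i w - g i - t) - pospart (Gr i w - g i))
                     + dgm i * (negpart (Gr i w - g i - t) - negpart (Gr i w - g i))).
  by congr expect; apply: functional_extensionality => w; rewrite opprD addrA; ring.
rewrite G; ring.
Qed.

Lemma dem_perturb pi Pi g d Gr Dr (j : DT) t :
  let d' := fun k => if k == j then d k + t else d k in
  lagrangian p ag ad dgp dgm ddp ddm pi Pi g d' Gr Dr
  - lagrangian p ag ad dgp dgm ddp ddm pi Pi g d Gr Dr
  = expect p (fun w => ddp j * (negpart (Dr j w - d j - t) - negpart (Dr j w - d j))
                     + ddm j * (pospart (Dr j w - d j - t) - pospart (Dr j w - d j)))
    + t * (pi - expect p Pi).
Proof.
move=> d'.
have hd' : forall k, k != j -> d' k = d k by move=> k hk; rewrite /d' (negbTE hk).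
have dj : d' j = d j + t by rewrite /d' eqxx.
rewrite /lagrangian /objective.
rewrite (@sum_perturb DT d d' j hd') dj.
rewrite (@sum_perturb DT
  (fun k => expect p (fun w => - ad k * Dr k w + ddp k * negpart (Dr k w - d k)
                                   + ddm k * pospart (Dr k w - d k)))
  (fun k => expect p (fun w => - ad k * Dr k w + ddp k * negpart (Dr k w - d' k)
                                   + ddm k * pospart (Dr k w - d' k))) j);
  last by move=> k hk /=; rewrite hd'.
have E : forall w, \sum_k (Dr k w - d' k) = \sum_k (Dr k w - d k) - t.
  move=> w; rewrite (@sum_perturb DT (fun k => Dr k w - d k)
     (fun k => Dr k w - d' k) j) /=; first by rewrite dj; ring.
  by move=> k hk; rewrite hd'.
have F : (fun w => Pi w * (\sum_k (Gr k w - g k) - \sum_k (Dr k w - d' k)))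
  = (fun w => Pi w * ((\sum_k (Gr k w - g k) - \sum_k (Dr k w - d k)) + t)).
  by apply: functional_extensionality => w; rewrite E; congr (_ * _); ring.
rewrite F expect_shift' /= dj.
rewrite expectB.
have G : expect p (fun w => - ad j * Dr j w + ddp j * negpart (Dr j w - (d j + t))
     + ddm j * pospart (Dr j w - (d j + t)) -
      (- ad j * Dr j w + ddp j * negpart (Dr j w - d j) + ddm j * pospart (Dr j w - d j)))
  = expect p (fun w => ddp j * (negpart (Dr j w - d j - t) - negpart (Dr j w - d j))
                     + ddm j * (pospart (Dr j w - d j - t) - pospart (Dr j w - d j))).
  by congr expect; apply: functional_extensionality => w; rewrite opprD addrA; ring.
rewrite G; ring.
Qed.

End Aux.

Theorem theorem2 (R : realFieldType) (GT DT Om : finType) (i0 : GT) (j0 : DT)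
  (p : Om -> R) (hp_pos : forall w, 0 < p w) (hp_sum : \sum_(w : Om) p w = 1)
  (ag : GT -> R) (ad : DT -> R)
  (hag : forall i, 0 <= ag i) (had : forall j, 0 <= ad j)
  (dgp dgm : GT -> R) (ddp ddm : DT -> R)
  (hdgp : forall i, 0 < dgp i) (hdgm : forall i, 0 < dgm i)
  (hddp : forall j, 0 < ddp j) (hddm : forall j, 0 < ddm j)
  (Gbar : GT -> Om -> R) (Dbar : DT -> Om -> R)
  (hGbar : forall i w, 0 <= Gbar i w) (hDbar : forall j w, 0 <= Dbar j w)
  (g : GT -> R) (d : DT -> R) (Gr : GT -> Om -> R) (Dr : DT -> Om -> R)
  (pi : R) (Pi : Om -> R)
  (hopt : optimal_with_prices p ag ad dgp dgm ddp ddm Gbar Dbar g d Gr Dr pi Pi) :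
  let Mpi := pi - expect p Pi in
  let dalpha_plus := Num.min (finmin i0 dgp) (finmin j0 ddp) in
  let dalpha_minus := Num.min (finmin i0 dgm) (finmin j0 ddm) in
  - dalpha_plus <= Mpi <= dalpha_minus.
Proof.
cbv zeta. set Mpi := pi - expect p Pi.
case: hopt => [[_ [_ hb]] hmin].
have optg : forall i t, 0 <= expect p (fun w => dgp i * (pospart (Gr i w - g i - t) - pospart (Gr i w - g i))
                     + dgm i * (negpart (Gr i w - g i - t) - negpart (Gr i w - g i)))
    - t * Mpi.
  move=> i t; rewrite -(@gen_perturb R Om p GT DT ag ad dgp dgm ddp ddm pi Pi g d Gr Dr i t).
  rewrite subr_ge0; exact: hmin.
have optd : forall j t, 0 <= expect p (fun w => ddp j * (negpart (Dr j w - d j - t) - negpart (Dr j w - d j))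
                     + ddm j * (pospart (Dr j w - d j - t) - pospart (Dr j w - d j)))
    + t * Mpi.
  move=> j t; rewrite -(@dem_perturb R Om p GT DT ag ad dgp dgm ddp ddm pi Pi g d Gr Dr j t).
  rewrite subr_ge0; exact: hmin.
apply/andP; split.
- rewrite lerNl le_min; apply/andP; split; apply: le_finmin.
  + move=> i; have := optg i (-1).
    have := @expect_le R Om p hp_pos
      (fun w => dgp i * (pospart (Gr i w - g i - -1) - pospart (Gr i w - g i))
                     + dgm i * (negpart (Gr i w - g i - -1) - negpart (Gr i w - g i)))
      (fun _ => dgp i).
    rewrite expect_cst //=.
    have : forall w, dgp i * (pospart (Gr i w - g i - -1) - pospart (Gr i w - g i))
                     + dgm i * (negpart (Gr i w - g i - -1) - negpart (Gr i w - g i)) <= dgp i.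
      move=> w; rewrite opprK.
      have h1 := @pp_inc R (Gr i w - g i); have h2 := @np_dec R (Gr i w - g i).
      have h3 := hdgp i; have h4 := hdgm i.
      nra.
    move=> H /(_ H); lra.
  + move=> j; have := optd j 1.
    have := @expect_le R Om p hp_pos
      (fun w => ddp j * (negpart (Dr j w - d j - 1) - negpart (Dr j w - d j))
                     + ddm j * (pospart (Dr j w - d j - 1) - pospart (Dr j w - d j)))
      (fun _ => ddp j).
    rewrite expect_cst //=.
    have : forall w, ddp j * (negpart (Dr j w - d j - 1) - negpart (Dr j w - d j))
                     + ddm j * (pospart (Dr j w - d j - 1) - pospart (Dr j w - d j)) <= ddp j.
      move=> w.
      have h1 := @np_inc R (Dr j w - d j); have h2 := @pp_dec R (Dr j w - d j).
      have h3 := hddp j; have h4 := hddm j.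
      nra.
    move=> H /(_ H); lra.
- rewrite le_min; apply/andP; split; apply: le_finmin.
  + move=> i; have := optg i 1.
    have := @expect_le R Om p hp_pos
      (fun w => dgp i * (pospart (Gr i w - g i - 1) - pospart (Gr i w - g i))
                     + dgm i * (negpart (Gr i w - g i - 1) - negpart (Gr i w - g i)))
      (fun _ => dgm i).
    rewrite expect_cst //=.
    have : forall w, dgp i * (pospart (Gr i w - g i - 1) - pospart (Gr i w - g i))
                     + dgm i * (negpart (Gr i w - g i - 1) - negpart (Gr i w - g i)) <= dgm i.
      move=> w.
      have h1 := @pp_dec R (Gr i w - g i); have h2 := @np_inc R (Gr i w - g i).
      have h3 := hdgp i; have h4 := hdgm i.
      nra.
    move=> H /(_ H); lra.
  + move=> j; have := optd j (-1).
    have := @expect_le R Om p hp_pos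
      (fun w => ddp j * (negpart (Dr j w - d j - -1) - negpart (Dr j w - d j))
                     + ddm j * (pospart (Dr j w - d j - -1) - pospart (Dr j w - d j)))
      (fun _ => ddm j).
    rewrite expect_cst //=.
    have : forall w, ddp j * (negpart (Dr j w - d j - -1) - negpart (Dr j w - d j))
                     + ddm j * (pospart (Dr j w - d j - -1) - pospart (Dr j w - d j)) <= ddm j.
      move=> w; rewrite opprK.
      have h1 := @np_dec R (Dr j w - d j); have h2 := @pp_inc R (Dr j w - d j).
      have h3 := hddp j; have h4 := hddm j.
      nra.
    move=> H /(_ H); lra.
Qed.
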